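(* Let $H\in C^\infty(\mathbb{R}^2)$ and let $\chi(q,p,t)$ be a smooth, rapidly decaying complex-valued solution of the Koopman–van Hove equation $$i\hbar\,\partial_t\chi=i\hbar\{H,\chi\}-\big(p\,\partial_pH-H\big)\chi .$$ Define $$\rho_c:=|\chi|^2+\partial_p\big(p|\chi|^2\big)+\hbar\,\operatorname{Im}\{\bar\chi,\chi\}.$$ Then $\rho_c$ is real and satisfies the classical Liouville equation $\partial_t\rho_c=\{H,\rho_c\}$. Furthermore, $\int\rho_c\,H\,{\rm d}q\,{\rm d}p=\operatorname{Re}\int\bar\chi\big(i\hbar\{H,\chi\}-(p\,\partial_pH-H)\chi\big)\,{\rm d}q\,{\rm d}p$.
   Context: Phase space is $\mathbb{R}^2$ with coordinates $(q,p)$ and Poisson bracket $\{f,g\}=\partial_qf\,\partial_pg-\partial_pf\,\partial_qg$; $\bar\chi$ denotes complex conjugation and $\hbar>0$ is a constant. *)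

(* Defs.v *)
From Stdlib Require Import Reals List.
From Coquelicot Require Import Coquelicot.
Open Scope R_scope.

Inductive dir3 := Dq | Dp | Dt.

Definition pd3 (d : dir3) (f : R -> R -> R -> R) : R -> R -> R -> R :=
  match d with
  | Dq => fun q p t => Derive (fun x => f x p t) q
  | Dp => fun q p t => Derive (fun x => f q x t) p
  | Dt => fun q p t => Derive (fun x => f q p x) t
  end.

Definition ex_pd3 (d : dir3) (f : R -> R -> R -> R) (q p t : R) : Prop :=
  match d with
  | Dq => ex_derive (fun x => f x p t) q
  | Dp => ex_derive (fun x => f q x t) p
  | Dt => ex_derive (fun x => f q p x) t
  end.

Fixpoint pd3s (ds : list dir3) (f : R -> R -> R -> R) : R -> R -> R -> R :=
  match ds with
  | nil => f
  | d :: ds' => pd3 d (pd3s ds' f)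
  end.

Definition smooth3 (f : R -> R -> R -> R) : Prop :=
  forall ds : list dir3,
    (forall q p t,
       continuous (fun x : R * R * R => pd3s ds f (fst (fst x)) (snd (fst x)) (snd x))
                  (q, p, t)) /\
    (forall d q p t, ex_pd3 d (pd3s ds f) q p t).

Definition liftH (H : R -> R -> R) : R -> R -> R -> R := fun q p _ => H q p.

Definition smooth2 (H : R -> R -> R) : Prop := smooth3 (liftH H).

Definition reF (f : R -> R -> R -> C) : R -> R -> R -> R := fun q p t => Re (f q p t).
Definition imF (f : R -> R -> R -> C) : R -> R -> R -> R := fun q p t => Im (f q p t).

Definition dC (d : dir3) (f : R -> R -> R -> C) : R -> R -> R -> C :=
  fun q p t => (pd3 d (reF f) q p t, pd3 d (imF f) q p t).

Definition conjF (f : R -> R -> R -> C) : R -> R -> R -> C := fun q p t => Cconj (f q p t).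

Definition PB (f g : R -> R -> R -> C) : R -> R -> R -> C :=
  fun q p t => (dC Dq f q p t * dC Dp g q p t - dC Dp f q p t * dC Dq g q p t)%C.

Definition Hc (H : R -> R -> R) : R -> R -> R -> C := fun q p _ => RtoC (H q p).

Definition KvH (hbar : R) (H : R -> R -> R) (chi : R -> R -> R -> C) : Prop :=
  forall q p t,
    (Ci * RtoC hbar * dC Dt chi q p t)%C =
    (Ci * RtoC hbar * PB (Hc H) chi q p t
     - RtoC (p * pd3 Dp (liftH H) q p t - H q p) * chi q p t)%C.

(* "rapidly decaying" (in (q,p), for each time t): every derivative of chi
   decays faster than any power of (1+q^2+p^2), also after multiplication by
   any derivative of H (so that all the phase-space integrals involving H
   converge and integrations by parts have no boundary terms). *)
Definition rapid_decay (H : R -> R -> R) (chi : R -> R -> R -> C) : Prop :=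
  forall (t : R) (ds dsH : list dir3) (n : nat),
    exists M : R, forall q p,
      (1 + q ^ 2 + p ^ 2) ^ n * (1 + Rabs (pd3s dsH (liftH H) q p t)) *
        (Rabs (pd3s ds (reF chi) q p t) + Rabs (pd3s ds (imF chi) q p t)) <= M.

Definition rho_c (hbar : R) (chi : R -> R -> R -> C) : R -> R -> R -> C :=
  fun q p t =>
    (RtoC (Cmod (chi q p t) ^ 2)
     + dC Dp (fun q' p' t' => RtoC (p' * Cmod (chi q' p' t') ^ 2)) q p t
     + RtoC (hbar * Im (PB (conjF chi) chi q p t)))%C.

Definition Int2 (f : R -> R -> R) : R :=
  RInt_gen (fun q => RInt_gen (fun p => f q p) (Rbar_locally m_infty) (Rbar_locally p_infty))
           (Rbar_locally m_infty) (Rbar_locally p_infty).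

(* Main.v *)
Require Import Defs.
From Stdlib Require Import Reals List Lra FunctionalExtensionality.
From Coquelicot Require Import Coquelicot.
Import ListNotations.
Open Scope R_scope.

Lemma pd3s_app ds1 ds2 f : pd3s (ds1 ++ ds2) f = pd3s ds1 (pd3s ds2 f).
Proof. induction ds1; simpl; [reflexivity| now rewrite IHds1]. Qed.

Lemma smooth3_pd3s f ds : smooth3 f -> smooth3 (pd3s ds f).
Proof. intros Hs ds'. rewrite <- pd3s_app. apply Hs. Qed.

Lemma exdq f ds q p t : smooth3 f -> ex_derive (fun x => pd3s ds f x p t) q.
Proof. intros Hs. exact (proj2 (Hs ds) Dq q p t). Qed.
Lemma exdp f ds q p t : smooth3 f -> ex_derive (fun x => pd3s ds f q x t) p.
Proof. intros Hs. exact (proj2 (Hs ds) Dp q p t). Qed.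
Lemma exdt f ds q p t : smooth3 f -> ex_derive (fun x => pd3s ds f q p x) t.
Proof. intros Hs. exact (proj2 (Hs ds) Dt q p t). Qed.

Lemma idpair_cont {U V : UniformSpace} (z : U * V) : continuous (fun x : U * V => (fst x, snd x)) z.
Proof. apply (continuous_ext (fun x => x)). intros [x y]; reflexivity. apply continuous_id. Qed.

Lemma cont3_2d (F : R -> R -> R -> R) :
  (forall q p t, continuous (fun x : R * R * R => F (fst (fst x)) (snd (fst x)) (snd x)) (q, p, t)) ->
  forall q p t, continuity_2d_pt (fun u v => F u v t) q p /\
                continuity_2d_pt (fun u v => F u p v) q t /\
                continuity_2d_pt (fun u v => F q u v) p t.
Proof.
  intros HF q p t. repeat split; apply continuity_2d_pt_filterlim.
  - apply (continuous_comp (fun z : R * R => (z, t))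
       (fun x : R * R * R => F (fst (fst x)) (snd (fst x)) (snd x)) (q, p)).
    + apply continuous_comp_2; [apply continuous_id| apply continuous_const|].
      apply idpair_cont.
    + apply HF.
  - apply (continuous_comp (fun z : R * R => ((fst z, p), snd z))
       (fun x : R * R * R => F (fst (fst x)) (snd (fst x)) (snd x)) (q, t)).
    + apply continuous_comp_2.
      * apply continuous_comp_2; [apply continuous_fst| apply continuous_const|].
        apply idpair_cont.
      * apply continuous_snd.
      * apply idpair_cont.
    + apply HF.
  - apply (continuous_comp (fun z : R * R => ((q, fst z), snd z))
       (fun x : R * R * R => F (fst (fst x)) (snd (fst x)) (snd x)) (p, t)).
    + apply continuous_comp_2.
      * apply continuous_comp_2; [apply continuous_const| apply continuous_fst|].
        apply idpair_cont.
      * apply continuous_snd.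
      * apply idpair_cont.
    + apply HF.
Qed.

Lemma loc2d_all (P : R -> R -> Prop) x y : (forall u v, P u v) -> locally_2d P x y.
Proof. intros HP. exists (mkposreal 1 Rlt_0_1). intros; apply HP. Qed.

Lemma sw_qp g q p t : smooth3 g -> pd3 Dq (pd3 Dp g) q p t = pd3 Dp (pd3 Dq g) q p t.
Proof.
  intros Hs. simpl.
  apply (Schwarz (fun u v => g u v t) q p).
  - apply loc2d_all; intros u v; repeat split.
    + exact (exdq g [] u v t Hs).
    + exact (exdp g [] u v t Hs).
    + exact (exdq g [Dp] u v t Hs).
    + exact (exdp g [Dq] u v t Hs).
  - exact (proj1 (cont3_2d (pd3s [Dq;Dp] g) (proj1 (Hs [Dq;Dp])) q p t)).
  - exact (proj1 (cont3_2d (pd3s [Dp;Dq] g) (proj1 (Hs [Dp;Dq])) q p t)).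
Qed.

Lemma sw_qt g q p t : smooth3 g -> pd3 Dq (pd3 Dt g) q p t = pd3 Dt (pd3 Dq g) q p t.
Proof.
  intros Hs. simpl.
  apply (Schwarz (fun u v => g u p v) q t).
  - apply loc2d_all; intros u v; repeat split.
    + exact (exdq g [] u p v Hs).
    + exact (exdt g [] u p v Hs).
    + exact (exdq g [Dt] u p v Hs).
    + exact (exdt g [Dq] u p v Hs).
  - exact (proj1 (proj2 (cont3_2d (pd3s [Dq;Dt] g) (proj1 (Hs [Dq;Dt])) q p t))).
  - exact (proj1 (proj2 (cont3_2d (pd3s [Dt;Dq] g) (proj1 (Hs [Dt;Dq])) q p t))).
Qed.

Lemma sw_pt g q p t : smooth3 g -> pd3 Dp (pd3 Dt g) q p t = pd3 Dt (pd3 Dp g) q p t.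
Proof.
  intros Hs. simpl.
  apply (Schwarz (fun u v => g q u v) p t).
  - apply loc2d_all; intros u v; repeat split.
    + exact (exdp g [] q u v Hs).
    + exact (exdt g [] q u v Hs).
    + exact (exdp g [Dt] q u v Hs).
    + exact (exdt g [Dp] q u v Hs).
  - exact (proj2 (proj2 (cont3_2d (pd3s [Dp;Dt] g) (proj1 (Hs [Dp;Dt])) q p t))).
  - exact (proj2 (proj2 (cont3_2d (pd3s [Dt;Dp] g) (proj1 (Hs [Dt;Dp])) q p t))).
Qed.

Lemma swap3 f ds d1 d2 q p t : smooth3 f ->
  pd3s (d1 :: d2 :: ds) f q p t = pd3s (d2 :: d1 :: ds) f q p t.
Proof.
  intros Hs. pose proof (smooth3_pd3s f ds Hs) as Hg. simpl.
  destruct d1, d2; try reflexivity.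
  - apply sw_qp; auto.
  - apply sw_qt; auto.
  - symmetry; apply sw_qp; auto.
  - apply sw_pt; auto.
  - symmetry; apply sw_qt; auto.
  - symmetry; apply sw_pt; auto.
Qed.
Lemma kvh_comp hbar H chi q p t : KvH hbar H chi ->
  let a := reF chi in let b := imF chi in let h := liftH H in
  - hbar * pd3 Dt b q p t = - hbar * (pd3 Dq h q p t * pd3 Dp b q p t - pd3 Dp h q p t * pd3 Dq b q p t)
      - (p * pd3 Dp h q p t - H q p) * a q p t /\
  hbar * pd3 Dt a q p t = hbar * (pd3 Dq h q p t * pd3 Dp a q p t - pd3 Dp h q p t * pd3 Dq a q p t)
      - (p * pd3 Dp h q p t - H q p) * b q p t.
Proof.
  intros K a b h. specialize (K q p t).
  unfold PB, dC, Hc in K.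
  assert (E0 : forall d, pd3 d (imF (fun q p _ => RtoC (H q p))) q p t = 0).
  { intros []; simpl; unfold imF; simpl; apply Derive_const. }
  rewrite !E0 in K.
  change (pd3 Dq (reF (fun q p _ => RtoC (H q p))) q p t) with (pd3 Dq h q p t) in K.
  change (pd3 Dp (reF (fun q p _ => RtoC (H q p))) q p t) with (pd3 Dp h q p t) in K.
  change (pd3 Dp (liftH H) q p t) with (pd3 Dp h q p t) in K.
  pose proof (f_equal fst K) as K1. pose proof (f_equal snd K) as K2.
  simpl in K1, K2. unfold a, b, h in *. simpl. unfold reF, imF in *. simpl in *. unfold Re, Im in *. split; nra.
Qed.


Lemma Cmod2 (z : C) : Cmod z ^ 2 = fst z ^ 2 + snd z ^ 2.
Proof. unfold Cmod. rewrite pow2_sqrt; [reflexivity|]. nra. Qed.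

Lemma Cmod2' (z : C) : Cmod z * (Cmod z * 1) = fst z * fst z + snd z * snd z.
Proof. rewrite Rmult_1_r, <- Rsqr_def. unfold Cmod. rewrite Rsqr_sqrt; [simpl; ring|]. nra. Qed.

Definition RHO (hbar : R) (chi : R -> R -> R -> C) (q p t : R) : R :=
  let a := reF chi in let b := imF chi in
  2 * (pd3s [] a q p t ^ 2 + pd3s [] b q p t ^ 2)
  + 2 * p * (pd3s [] a q p t * pd3s [Dp] a q p t + pd3s [] b q p t * pd3s [Dp] b q p t)
  + 2 * hbar * (pd3s [Dq] a q p t * pd3s [Dp] b q p t - pd3s [Dp] a q p t * pd3s [Dq] b q p t).

Lemma im_rho hbar chi q p t : Im (rho_c hbar chi q p t) = 0.
Proof.
  unfold rho_c, dC. simpl. unfold imF. simpl. rewrite Derive_const. ring.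
Qed.

Lemma deriv_pf (u v : R -> R) p : ex_derive u p -> ex_derive v p ->
  Derive (fun x => x * (u x * (u x * 1) + v x * (v x * 1))) p =
  u p * u p + v p * v p + p * (2 * u p * Derive u p + 2 * v p * Derive v p).
Proof. intros Hu Hv. apply is_derive_unique. auto_derive. auto.
  change (Derive (fun x0 => u x0) p) with (Derive u p). change (Derive (fun x0 => v x0) p) with (Derive v p). ring. Qed.

Lemma re_rho hbar chi q p t : smooth3 (reF chi) -> smooth3 (imF chi) ->
  Re (rho_c hbar chi q p t) = RHO hbar chi q p t.
Proof.
  intros Ha Hb. unfold rho_c, RHO, dC, PB, conjF. simpl.
  rewrite Cmod2'.
  rewrite (Derive_ext _ (fun x => x * (reF chi q x t ^ 2 + imF chi q x t ^ 2))).
  2:{ intros x. unfold reF at 1. simpl. rewrite Cmod2'. unfold reF, imF, Re, Im. ring. }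
  unfold Cconj, reF, imF, Re, Im. simpl.
  rewrite !Derive_opp.
  rewrite (deriv_pf (fun x => fst (chi q x t)) (fun x => snd (chi q x t)) p).
  2: exact (exdp _ [] q p t Ha). 2: exact (exdp _ [] q p t Hb).
  ring.
Qed.

Lemma fold_q ds f q p t : Derive (fun x : R => pd3s ds f x p t) q = pd3s (Dq :: ds) f q p t.
Proof. reflexivity. Qed.
Lemma fold_p ds f q p t : Derive (fun x : R => pd3s ds f q x t) p = pd3s (Dp :: ds) f q p t.
Proof. reflexivity. Qed.
Lemma fold_t ds f q p t : Derive (fun x : R => pd3s ds f q p x) t = pd3s (Dt :: ds) f q p t.
Proof. reflexivity. Qed.

Ltac exd1 := match goal with
  | |- ex_derive (fun x => ?f x ?p ?t) ?q => apply (exdq f [] q p t); assumption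
  | |- ex_derive (fun x => ?f ?q x ?t) ?p => apply (exdp f [] q p t); assumption
  | |- ex_derive (fun x => ?f ?q ?p x) ?t => apply (exdt f [] q p t); assumption
  | |- ex_derive (fun x => Derive (fun y1 => ?f y1 ?p ?t) x) ?q => apply (exdq f [Dq] q p t); assumption
  | |- ex_derive (fun x => Derive (fun y1 => ?f y1 x ?t) ?q) ?p => apply (exdp f [Dq] q p t); assumption
  | |- ex_derive (fun x => Derive (fun y1 => ?f y1 ?p x) ?q) ?t => apply (exdt f [Dq] q p t); assumption
  | |- ex_derive (fun x => Derive (fun y1 => ?f x y1 ?t) ?p) ?q => apply (exdq f [Dp] q p t); assumption
  | |- ex_derive (fun x => Derive (fun y1 => ?f ?q y1 ?t) x) ?p => apply (exdp f [Dp] q p t); assumption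
  | |- ex_derive (fun x => Derive (fun y1 => ?f ?q y1 x) ?p) ?t => apply (exdt f [Dp] q p t); assumption
  | |- ex_derive (fun x => Derive (fun y1 => ?f x ?p y1) ?t) ?q => apply (exdq f [Dt] q p t); assumption
  | |- ex_derive (fun x => Derive (fun y1 => ?f ?q x y1) ?t) ?p => apply (exdp f [Dt] q p t); assumption
  | |- ex_derive (fun x => Derive (fun y1 => ?f ?q ?p y1) x) ?t => apply (exdt f [Dt] q p t); assumption
  | |- ex_derive (fun x => Derive (fun y1 => Derive (fun y2 => ?f y2 ?p ?t) y1) x) ?q => apply (exdq f [Dq;Dq] q p t); assumption
  | |- ex_derive (fun x => Derive (fun y1 => Derive (fun y2 => ?f y2 x ?t) y1) ?q) ?p => apply (exdp f [Dq;Dq] q p t); assumption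
  | |- ex_derive (fun x => Derive (fun y1 => Derive (fun y2 => ?f y2 ?p x) y1) ?q) ?t => apply (exdt f [Dq;Dq] q p t); assumption
  | |- ex_derive (fun x => Derive (fun y1 => Derive (fun y2 => ?f y1 y2 ?t) ?p) x) ?q => apply (exdq f [Dq;Dp] q p t); assumption
  | |- ex_derive (fun x => Derive (fun y1 => Derive (fun y2 => ?f y1 y2 ?t) x) ?q) ?p => apply (exdp f [Dq;Dp] q p t); assumption
  | |- ex_derive (fun x => Derive (fun y1 => Derive (fun y2 => ?f y1 y2 x) ?p) ?q) ?t => apply (exdt f [Dq;Dp] q p t); assumption
  | |- ex_derive (fun x => Derive (fun y1 => Derive (fun y2 => ?f y1 ?p y2) ?t) x) ?q => apply (exdq f [Dq;Dt] q p t); assumption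
  | |- ex_derive (fun x => Derive (fun y1 => Derive (fun y2 => ?f y1 x y2) ?t) ?q) ?p => apply (exdp f [Dq;Dt] q p t); assumption
  | |- ex_derive (fun x => Derive (fun y1 => Derive (fun y2 => ?f y1 ?p y2) x) ?q) ?t => apply (exdt f [Dq;Dt] q p t); assumption
  | |- ex_derive (fun x => Derive (fun y1 => Derive (fun y2 => ?f y2 y1 ?t) x) ?p) ?q => apply (exdq f [Dp;Dq] q p t); assumption
  | |- ex_derive (fun x => Derive (fun y1 => Derive (fun y2 => ?f y2 y1 ?t) ?q) x) ?p => apply (exdp f [Dp;Dq] q p t); assumption
  | |- ex_derive (fun x => Derive (fun y1 => Derive (fun y2 => ?f y2 y1 x) ?q) ?p) ?t => apply (exdt f [Dp;Dq] q p t); assumption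
  | |- ex_derive (fun x => Derive (fun y1 => Derive (fun y2 => ?f x y2 ?t) y1) ?p) ?q => apply (exdq f [Dp;Dp] q p t); assumption
  | |- ex_derive (fun x => Derive (fun y1 => Derive (fun y2 => ?f ?q y2 ?t) y1) x) ?p => apply (exdp f [Dp;Dp] q p t); assumption
  | |- ex_derive (fun x => Derive (fun y1 => Derive (fun y2 => ?f ?q y2 x) y1) ?p) ?t => apply (exdt f [Dp;Dp] q p t); assumption
  | |- ex_derive (fun x => Derive (fun y1 => Derive (fun y2 => ?f x y1 y2) ?t) ?p) ?q => apply (exdq f [Dp;Dt] q p t); assumption
  | |- ex_derive (fun x => Derive (fun y1 => Derive (fun y2 => ?f ?q y1 y2) ?t) x) ?p => apply (exdp f [Dp;Dt] q p t); assumption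
  | |- ex_derive (fun x => Derive (fun y1 => Derive (fun y2 => ?f ?q y1 y2) x) ?p) ?t => apply (exdt f [Dp;Dt] q p t); assumption
  | |- ex_derive (fun x => Derive (fun y1 => Derive (fun y2 => ?f y2 ?p y1) x) ?t) ?q => apply (exdq f [Dt;Dq] q p t); assumption
  | |- ex_derive (fun x => Derive (fun y1 => Derive (fun y2 => ?f y2 x y1) ?q) ?t) ?p => apply (exdp f [Dt;Dq] q p t); assumption
  | |- ex_derive (fun x => Derive (fun y1 => Derive (fun y2 => ?f y2 ?p y1) ?q) x) ?t => apply (exdt f [Dt;Dq] q p t); assumption
  | |- ex_derive (fun x => Derive (fun y1 => Derive (fun y2 => ?f x y2 y1) ?p) ?t) ?q => apply (exdq f [Dt;Dp] q p t); assumption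
  | |- ex_derive (fun x => Derive (fun y1 => Derive (fun y2 => ?f ?q y2 y1) x) ?t) ?p => apply (exdp f [Dt;Dp] q p t); assumption
  | |- ex_derive (fun x => Derive (fun y1 => Derive (fun y2 => ?f ?q y2 y1) ?p) x) ?t => apply (exdt f [Dt;Dp] q p t); assumption
  | |- ex_derive (fun x => Derive (fun y1 => Derive (fun y2 => ?f x ?p y2) y1) ?t) ?q => apply (exdq f [Dt;Dt] q p t); assumption
  | |- ex_derive (fun x => Derive (fun y1 => Derive (fun y2 => ?f ?q x y2) y1) ?t) ?p => apply (exdp f [Dt;Dt] q p t); assumption
  | |- ex_derive (fun x => Derive (fun y1 => Derive (fun y2 => ?f ?q ?p y2) y1) x) ?t => apply (exdt f [Dt;Dt] q p t); assumption
  end.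

Ltac solve_ex := repeat match goal with
  | |- _ /\ _ => split
  | |- True => exact I
  | |- ex_derive _ _ => exd1
  end.

Ltac fold_all := repeat first [rewrite fold_q | rewrite fold_p | rewrite fold_t].

Definition At (hb : R) (a b h : R -> R -> R -> R) (q p t : R) : R :=
  pd3s [Dq] h q p t * pd3s [Dp] a q p t - pd3s [Dp] h q p t * pd3s [Dq] a q p t
  - (p * pd3s [Dp] h q p t - pd3s [] h q p t) / hb * pd3s [] b q p t.
Definition Bt (hb : R) (a b h : R -> R -> R -> R) (q p t : R) : R :=
  pd3s [Dq] h q p t * pd3s [Dp] b q p t - pd3s [Dp] h q p t * pd3s [Dq] b q p t
  + (p * pd3s [Dp] h q p t - pd3s [] h q p t) / hb * pd3s [] a q p t.

Lemma kvh_fun hbar H chi : 0 < hbar -> KvH hbar H chi ->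
  pd3 Dt (reF chi) = At hbar (reF chi) (imF chi) (liftH H) /\
  pd3 Dt (imF chi) = Bt hbar (reF chi) (imF chi) (liftH H).
Proof.
  intros hp K. split; do 3 (apply functional_extensionality; intro);
  destruct (kvh_comp hbar H chi x x0 x1 K) as [K1 K2]; unfold At, Bt; simpl in *;
  apply (Rmult_eq_reg_l hbar); try lra; field_simplify; try lra;
  unfold liftH in *; lra.
Qed.

Lemma part2 hbar H chi q p t : 0 < hbar -> smooth2 H -> smooth3 (reF chi) -> smooth3 (imF chi) ->
  KvH hbar H chi ->
  pd3 Dt (RHO hbar chi) q p t =
  pd3s [Dq] (liftH H) q p t * pd3 Dp (RHO hbar chi) q p t - pd3s [Dp] (liftH H) q p t * pd3 Dq (RHO hbar chi) q p t.
Proof.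
  intros hp Hh Ha Hb K. destruct (kvh_fun hbar H chi hp K) as [Ka Kb].
  unfold smooth2 in Hh.
  cbn [pd3]. unfold RHO. cbv beta zeta.
  match goal with |- Derive ?f ?x = _ => erewrite (is_derive_unique f x) end.
  2:{ auto_derive. solve_ex. reflexivity. }
  match goal with |- _ = _ * Derive ?f ?x - _ => erewrite (is_derive_unique f x) end.
  2:{ auto_derive. solve_ex. reflexivity. }
  match goal with |- _ = _ - _ * Derive ?f ?x => erewrite (is_derive_unique f x) end.
  2:{ auto_derive. solve_ex. reflexivity. }
  set (AA := At hbar (reF chi) (imF chi) (liftH H)).
  set (BB := Bt hbar (reF chi) (imF chi) (liftH H)).
  assert (T1 : Derive (fun x => reF chi q p x) t = AA q p t) by (change (pd3 Dt (reF chi) q p t = AA q p t); rewrite Ka; reflexivity).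
  assert (T2 : Derive (fun x => imF chi q p x) t = BB q p t) by (change (pd3 Dt (imF chi) q p t = BB q p t); rewrite Kb; reflexivity).
  assert (T3 : Derive (fun x => Derive (fun x0 => reF chi q x0 x) p) t = Derive (fun x => AA q x t) p).
  { change (pd3s [Dt;Dp] (reF chi) q p t = pd3 Dp AA q p t). rewrite (swap3 _ [] Dt Dp q p t Ha). cbn [pd3s]. rewrite Ka. reflexivity. }
  assert (T4 : Derive (fun x => Derive (fun x0 => imF chi q x0 x) p) t = Derive (fun x => BB q x t) p).
  { change (pd3s [Dt;Dp] (imF chi) q p t = pd3 Dp BB q p t). rewrite (swap3 _ [] Dt Dp q p t Hb). cbn [pd3s]. rewrite Kb. reflexivity. }
  assert (T5 : Derive (fun x => Derive (fun x0 => reF chi x0 p x) q) t = Derive (fun x => AA x p t) q).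
  { change (pd3s [Dt;Dq] (reF chi) q p t = pd3 Dq AA q p t). rewrite (swap3 _ [] Dt Dq q p t Ha). cbn [pd3s]. rewrite Ka. reflexivity. }
  assert (T6 : Derive (fun x => Derive (fun x0 => imF chi x0 p x) q) t = Derive (fun x => BB x p t) q).
  { change (pd3s [Dt;Dq] (imF chi) q p t = pd3 Dq BB q p t). rewrite (swap3 _ [] Dt Dq q p t Hb). cbn [pd3s]. rewrite Kb. reflexivity. }
  rewrite T1, T2, T3, T4, T5, T6. clear T1 T2 T3 T4 T5 T6.
  erewrite (is_derive_unique (fun x : R => AA q x t) p).
  2:{ unfold AA, At. auto_derive. solve_ex. reflexivity. }
  erewrite (is_derive_unique (fun x : R => BB q x t) p).
  2:{ unfold BB, Bt. auto_derive. solve_ex. reflexivity. }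
  erewrite (is_derive_unique (fun x : R => AA x p t) q).
  2:{ unfold AA, At. auto_derive. solve_ex. reflexivity. }
  erewrite (is_derive_unique (fun x : R => BB x p t) q).
  2:{ unfold BB, Bt. auto_derive. solve_ex. reflexivity. }
  unfold AA, BB, At, Bt. cbn [pd3s pd3].
  pose proof (swap3 (reF chi) [] Dq Dp q p t Ha) as S1.
  pose proof (swap3 (imF chi) [] Dq Dp q p t Hb) as S2.
  pose proof (swap3 (liftH H) [] Dq Dp q p t Hh) as S3.
  cbn [pd3s pd3] in S1, S2, S3. rewrite S1, S2, S3.
  field. lra.
Qed.

Lemma pd3_zero d q p t : pd3 d (fun _ _ _ => 0) q p t = 0.
Proof. destruct d; simpl; apply Derive_const. Qed.

Lemma part2C hbar H chi q p t : 0 < hbar -> smooth2 H -> smooth3 (reF chi) -> smooth3 (imF chi) ->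
  KvH hbar H chi ->
  dC Dt (rho_c hbar chi) q p t = PB (Hc H) (rho_c hbar chi) q p t.
Proof.
  intros hp Hh Ha Hb K.
  assert (Er : reF (rho_c hbar chi) = RHO hbar chi).
  { do 3 (apply functional_extensionality; intro). apply re_rho; auto. }
  assert (Ei : imF (rho_c hbar chi) = fun _ _ _ => 0).
  { do 3 (apply functional_extensionality; intro). apply im_rho. }
  assert (Eh : reF (Hc H) = liftH H) by reflexivity.
  assert (Ehi : imF (Hc H) = fun _ _ _ => 0) by reflexivity.
  unfold PB, dC. rewrite Er, Ei, Eh, Ehi, !pd3_zero.
  rewrite (part2 hbar H chi q p t hp Hh Ha Hb K).
  apply injective_projections; simpl; ring.
Qed.
From Coquelicot Require Import Coquelicot.
Open Scope R_scope.

Lemma ball_R (x y : R) (e : R) : ball x e y <-> Rabs (y - x) < e.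
Proof. reflexivity. Qed.

Lemma cont2_p g q p : continuity_2d_pt g q p -> continuous (g q) p.
Proof.
  intros Hg. apply filterlim_locally. intros eps.
  destruct (Hg eps) as [d Hd]. exists d. intros y Hy.
  apply ball_R. apply (Hd q y). rewrite Rminus_diag_eq, Rabs_R0 by reflexivity. apply cond_pos.
  exact Hy.
Qed.

Lemma int_inv_sq a b : (0 < a \/ b < 0) -> a <= b -> is_RInt (fun x => / x ^ 2) a b (/ a - / b).
Proof.
  intros Hab Hle.
  assert (Hnz : forall x, Rmin a b <= x <= Rmax a b -> x <> 0).
  { rewrite Rmin_left, Rmax_right by lra. intros x Hx. lra. }
  replace (/ a - / b) with (minus ((fun x => - / x) b) ((fun x => - / x) a)).
  2:{ unfold minus, plus, opp; simpl. ring. }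
  apply (is_RInt_derive (fun x => - / x)).
  - intros x Hx. specialize (Hnz x Hx). auto_derive; [exact Hnz|]. field. exact Hnz.
  - intros x Hx. specialize (Hnz x Hx). apply (@ex_derive_continuous R_AbsRing R_NormedModule). auto_derive. rewrite Rmult_1_r. apply Rmult_integral_contrapositive; auto.
Qed.

Lemma RInt_correctR (f : R -> R) a b : ex_RInt f a b -> is_RInt f a b (RInt f a b).
Proof. exact (@RInt_correct R_CompleteNormedModule f a b). Qed.
Lemma ex_RInt_contR (f : R -> R) a b : (forall x, continuous f x) -> ex_RInt f a b.
Proof. intros H. apply (@ex_RInt_continuous R_CompleteNormedModule). intros; apply H. Qed.

Lemma RInt_swapR (f : R -> R) a b : ex_RInt f a b -> RInt f b a = - RInt f a b.
Proof. intros H. rewrite <- (@opp_RInt_swap R_CompleteNormedModule f a b H). reflexivity. Qed.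
Lemma RInt_ChaslesR (f : R -> R) a b c : ex_RInt f a b -> ex_RInt f b c ->
  RInt f a b + RInt f b c = RInt f a c.
Proof. intros H1 H2. exact (@RInt_Chasles R_CompleteNormedModule f a b c H1 H2). Qed.

Section Tail.
Variable h : R -> R.
Variable C : R.
Hypothesis hc : forall x, continuous h x.
Hypothesis C0 : 0 <= C.
Hypothesis hb : forall x, Rabs (h x) <= C / (1 + x ^ 2).

Lemma exR a b : ex_RInt h a b.
Proof. apply (@ex_RInt_continuous R_CompleteNormedModule). intros; apply hc. Qed.

Lemma tail0 a b : (0 < a \/ b < 0) -> a <= b -> Rabs (RInt h a b) <= C * (/ a - / b).
Proof.
  intros Hab Hle.
  apply (norm_RInt_le h (fun x => C * / x ^ 2) a b); auto.
  - intros x Hx. assert (x <> 0) by lra. specialize (hb x).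
    change (norm (h x)) with (Rabs (h x)).
    eapply Rle_trans; [exact hb|]. unfold Rdiv. apply Rmult_le_compat_l; auto.
    assert (0 < x ^ 2) by (simpl; nra). apply Rinv_le_contravar; lra.
  - apply RInt_correctR, exR.
  - apply (is_RInt_scal (fun x => / x ^ 2) a b C). apply int_inv_sq; auto.
Qed.

Lemma tail_pos N a b : 1 <= N -> N <= a -> N <= b -> Rabs (RInt h a b) <= C / N.
Proof.
  intros HN Ha Hb.
  destruct (Rle_or_lt a b) as [Hab|Hab].
  - eapply Rle_trans; [apply tail0; lra|].
    unfold Rdiv. apply Rmult_le_compat_l; auto.
    assert (/ a <= / N) by (apply Rinv_le_contravar; lra).
    assert (0 < / b) by (apply Rinv_0_lt_compat; lra). lra.
  - rewrite RInt_swapR by apply exR. rewrite Rabs_Ropp.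
    eapply Rle_trans; [apply tail0; lra|].
    unfold Rdiv. apply Rmult_le_compat_l; auto.
    assert (/ b <= / N) by (apply Rinv_le_contravar; lra).
    assert (0 < / a) by (apply Rinv_0_lt_compat; lra). lra.
Qed.

Lemma tail_neg N a b : 1 <= N -> a <= - N -> b <= - N -> Rabs (RInt h a b) <= C / N.
Proof.
  intros HN Ha Hb.
  assert (K : forall u v, u <= v -> v <= - N -> C * (/ u - / v) <= C / N).
  { intros u v Huv Hv. unfold Rdiv. apply Rmult_le_compat_l; auto.
    assert (/ u < 0) by (apply Rinv_lt_0_compat; lra).
    assert (/ - v <= / N) by (apply Rinv_le_contravar; lra).
    rewrite <- Ropp_inv_permute in H0 by lra. lra. }
  destruct (Rle_or_lt a b) as [Hab|Hab].
  - eapply Rle_trans; [apply tail0; lra|]. apply K; lra.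
  - rewrite RInt_swapR by apply exR. rewrite Rabs_Ropp.
    eapply Rle_trans; [apply tail0; lra|]. apply K; lra.
Qed.

End Tail.

Lemma lim_bound {T} (F : (T -> Prop) -> Prop) {FF : ProperFilter F} (f : T -> R) y c B :
  filterlim f F (locally y) -> F (fun x => Rabs (f x - c) <= B) -> Rabs (y - c) <= B.
Proof.
  intros Hf HB. destruct (Rle_or_lt (Rabs (y - c)) B) as [H|H]; auto. exfalso.
  assert (He : 0 < Rabs (y - c) - B) by lra.
  assert (H1 : F (fun x => ball y (mkposreal _ He) (f x))) by (apply Hf; apply locally_ball).
  destruct (filter_ex _ (filter_and _ _ H1 HB)) as [x [Hx1 Hx2]].
  simpl in Hx1. apply ball_R in Hx1. simpl in Hx1.
  assert (Rabs (y - c) <= Rabs (f x - y) + Rabs (f x - c)).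
  { replace (y - c) with (-(f x - y) + (f x - c)) by ring.
    eapply Rle_trans; [apply Rabs_triang|]. rewrite Rabs_Ropp. lra. }
  change (Rabs (f x - y) < Rabs (y - c) - B) in Hx1. lra.
Qed.

Definition MI := Rbar_locally m_infty.
Definition PI' := Rbar_locally p_infty.

Lemma E1 (h : R -> R) C : (forall x, continuous h x) -> 0 <= C ->
  (forall x, Rabs (h x) <= C / (1 + x ^ 2)) ->
  exists L, is_RInt_gen h (Rbar_locally m_infty) (Rbar_locally p_infty) L /\
    forall N, 1 <= N -> Rabs (L - RInt h (- N) N) <= 2 * C / N.
Proof.
  intros hc C0 hb.
  set (R2 := fun ab : R * R => RInt h (fst ab) (snd ab)).
  assert (exR' : forall a b, ex_RInt h a b) by (intros; apply ex_RInt_contR; auto).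
  assert (Key : forall N a b, 1 <= N -> a <= - N -> N <= b -> Rabs (R2 (a, b) - RInt h (- N) N) <= 2 * C / N).
  { intros N a b HN Ha Hb. unfold R2; simpl.
    rewrite <- (RInt_ChaslesR h a (- N) b) by auto.
    rewrite <- (RInt_ChaslesR h (- N) N b) by auto.
    assert (H1 := tail_neg h C hc C0 hb N a (- N) HN Ha (Rle_refl _)).
    assert (H2 := tail_pos h C hc C0 hb N N b HN (Rle_refl _) Hb).
    replace (RInt h a (- N) + (RInt h (- N) N + RInt h N b) - RInt h (- N) N)
      with (RInt h a (- N) + RInt h N b) by ring.
    eapply Rle_trans; [apply Rabs_triang|]. unfold Rdiv in *. lra. }
  assert (Hc : exists y, filterlim R2 (filter_prod (Rbar_locally m_infty) (Rbar_locally p_infty)) (locally y)).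
  { apply filterlim_locally_cauchy. intros eps.
    set (M := 1 + 4 * C / eps).
    assert (HM : 1 <= M) by (unfold M; assert (0 <= 4 * C / eps) by (apply Rdiv_le_0_compat; [lra|apply cond_pos]); lra).
    exists (fun ab : R * R => fst ab < - M /\ M < snd ab). split.
    - apply (Filter_prod _ _ _ (fun a => a < - M) (fun b => M < b)).
      + exists (- M). auto.
      + exists M. auto.
      + intros a b Ha Hb. simpl. auto.
    - intros [a b] [a' b'] [Ha Hb] [Ha' Hb']. simpl in *. apply ball_R.
      assert (K1 := Key M a b HM ltac:(lra) ltac:(lra)).
      assert (K2 := Key M a' b' HM ltac:(lra) ltac:(lra)).
      assert (HC : 2 * C / M * 2 < eps).
      { assert (0 < eps) by apply cond_pos.
        assert (eps * M = eps + 4 * C) by (unfold M; field; lra).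
        apply (Rmult_lt_reg_r M); [lra|]. replace (2 * C / M * 2 * M) with (4 * C) by (field; lra). lra. }
      replace (R2 (a', b') - R2 (a, b)) with ((R2 (a', b') - RInt h (- M) M) - (R2 (a, b) - RInt h (- M) M)) by ring.
      eapply Rle_lt_trans; [apply Rabs_triang|]. rewrite Rabs_Ropp. lra. }
  destruct Hc as [y Hy]. exists y. split.
  - apply (filterlimi_lim_ext R2). intros [a b]. apply RInt_correctR. auto. exact Hy.
  - intros N HN. apply (lim_bound _ R2 y _ _ Hy).
    apply (Filter_prod _ _ _ (fun a => a < - N) (fun b => N < b)).
    + exists (- N). auto.
    + exists N. auto.
    + intros a b Ha Hb. apply Key; lra.
Qed.

Lemma RInt_minusR (f g : R -> R) a b : ex_RInt f a b -> ex_RInt g a b ->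
  RInt (fun x => f x - g x) a b = RInt f a b - RInt g a b.
Proof. intros H1 H2. exact (@RInt_minus R_CompleteNormedModule f g a b H1 H2). Qed.

Definition Cont (g : R -> R -> R) := forall q p, continuity_2d_pt g q p.
Definition Dec (g : R -> R -> R) := exists C, 0 <= C /\ forall q p, Rabs (g q p) <= C / ((1 + q ^ 2) * (1 + p ^ 2)).

Lemma C1 g c d q0 : c <= d -> Cont g -> continuous (fun q => RInt (g q) c d) q0.
Proof.
  intros Hcd Hg. apply filterlim_locally. intros eps.
  assert (He' : 0 < eps / (2 * (d - c + 1))) by (apply Rdiv_lt_0_compat; [apply cond_pos|lra]).
  destruct (uniform_continuity_2d g (q0 - 1) (q0 + 1) c d (fun x y _ _ => Hg x y) (mkposreal _ He')) as [del Hdel].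
  assert (Hm : 0 < Rmin del 1) by (apply Rmin_pos; [apply cond_pos|lra]).
  exists (mkposreal _ Hm). intros q Hq. apply ball_R.
  change (Rabs (q - q0) < Rmin del 1) in Hq.
  assert (Hq1 := Rmin_r del 1). assert (Hq2 := Rmin_l del 1).
  assert (exg : forall u, ex_RInt (g u) c d) by (intros; apply ex_RInt_contR; intros; apply cont2_p; apply Hg).
  rewrite <- RInt_minusR by auto.
  eapply Rle_lt_trans.
  - apply (abs_RInt_le_const _ c d (eps / (2 * (d - c + 1)))); auto.
    + apply ex_RInt_contR. intros x. apply (continuous_minus (g q) (g q0)); apply cont2_p, Hg.
    + intros p Hp. left.
      assert (Hqr : q0 - 1 <= q <= q0 + 1) by (apply Rabs_lt_between' in Hq; lra).
      apply (Hdel q0 p q p); try lra.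
      rewrite Rminus_diag_eq, Rabs_R0 by reflexivity. apply cond_pos.
  - assert (0 < eps) by apply cond_pos.
    apply (Rmult_lt_reg_r (2 * (d - c + 1))); [lra|].
    replace ((d - c) * (eps / (2 * (d - c + 1))) * (2 * (d - c + 1))) with ((d - c) * eps) by (field; lra).
    nra.
Qed.

Definition Iq (g : R -> R -> R) (q : R) : R :=
  RInt_gen (fun p => g q p) (Rbar_locally m_infty) (Rbar_locally p_infty).

Lemma gen_uniq (h : R -> R) L : is_RInt_gen h (Rbar_locally m_infty) (Rbar_locally p_infty) L ->
  RInt_gen h (Rbar_locally m_infty) (Rbar_locally p_infty) = L.
Proof. intros H. exact (@is_RInt_gen_unique R_CompleteNormedModule _ _ _ _ h L H). Qed.

Section Inner.
Variable g : R -> R -> R.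
Variable C : R.
Hypothesis gc : Cont g.
Hypothesis C0 : 0 <= C.
Hypothesis gb : forall q p, Rabs (g q p) <= C / ((1 + q ^ 2) * (1 + p ^ 2)).

Lemma inner_spec q :
  is_RInt_gen (fun p => g q p) (Rbar_locally m_infty) (Rbar_locally p_infty) (Iq g q) /\
  (forall N, 1 <= N -> Rabs (Iq g q - RInt (g q) (- N) N) <= 2 * C / N) /\
  Rabs (Iq g q) <= 4 * C / (1 + q ^ 2).
Proof.
  set (Cq := C / (1 + q ^ 2)).
  assert (Hq : 1 <= 1 + q ^ 2) by (simpl; nra).
  assert (Cq0 : 0 <= Cq) by (unfold Cq; apply Rdiv_le_0_compat; lra).
  assert (CqC : Cq <= C).
  { unfold Cq. unfold Rdiv. rewrite <- (Rmult_1_r C) at 2. apply Rmult_le_compat_l; auto.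
    rewrite <- Rinv_1. apply Rinv_le_contravar; lra. }
  assert (hb : forall p, Rabs (g q p) <= Cq / (1 + p ^ 2)).
  { intros p. replace (Cq / (1 + p ^ 2)) with (C / ((1 + q ^ 2) * (1 + p ^ 2))). apply gb.
    unfold Cq. field. split; simpl; nra. }
  destruct (E1 (g q) Cq (fun p => cont2_p g q p (gc q p)) Cq0 hb) as [L [HL HN]].
  assert (EL : Iq g q = L) by (unfold Iq; apply (gen_uniq (g q)); exact HL).
  rewrite EL. split; [exact HL|split].
  - intros N HN1. eapply Rle_trans; [apply HN; auto|].
    unfold Rdiv. apply Rmult_le_compat_r. left; apply Rinv_0_lt_compat; lra. lra.
  - assert (H1 := HN 1 (Rle_refl 1)).
    assert (H2 : Rabs (RInt (g q) (Ropp 1) 1) <= (1 - Ropp 1) * Cq).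
    { apply abs_RInt_le_const. lra. apply ex_RInt_contR. intros; apply cont2_p, gc.
      intros p _. eapply Rle_trans; [apply hb|]. unfold Rdiv.
      rewrite <- (Rmult_1_r Cq) at 2. apply Rmult_le_compat_l; auto.
      rewrite <- Rinv_1. apply Rinv_le_contravar; [lra|]. simpl; nra. }
    replace L with ((L - RInt (g q) (Ropp 1) 1) + RInt (g q) (Ropp 1) 1) by ring.
    eapply Rle_trans; [apply Rabs_triang|].
    replace (4 * C / (1 + q ^ 2)) with (4 * Cq) by (unfold Cq; field; lra).
    replace (2 * Cq / 1) with (2 * Cq) in H1 by field. lra.
Qed.

Lemma I_cont q0 : continuous (Iq g) q0.
Proof.
  apply filterlim_locally. intros eps.
  assert (He : 0 < eps) by apply cond_pos.
  set (N := 1 + 6 * C / eps).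
  assert (HN : 1 <= N) by (unfold N; assert (0 <= 6 * C / eps) by (apply Rdiv_le_0_compat; lra); lra).
  assert (HT : 2 * C / N < eps / 3).
  { assert (eps * N = eps + 6 * C) by (unfold N; field; lra).
    apply (Rmult_lt_reg_r N); [lra|]. replace (2 * C / N * N) with (2 * C) by (field; lra). lra. }
  assert (He3 : 0 < eps / 3) by lra.
  assert (Hc := C1 g (- N) N q0 ltac:(lra) gc).
  destruct (proj1 (filterlim_locally _ _) Hc (mkposreal _ He3)) as [d Hd].
  exists d. intros q Hq. specialize (Hd q Hq). apply ball_R in Hd. apply ball_R. simpl in Hd.
  destruct (inner_spec q) as [_ [T1 _]]. destruct (inner_spec q0) as [_ [T2 _]].
  specialize (T1 N HN). specialize (T2 N HN).
  replace (Iq g q - Iq g q0) with ((Iq g q - RInt (g q) (- N) N) + (RInt (g q) (- N) N - RInt (g q0) (- N) N) - (Iq g q0 - RInt (g q0) (- N) N)) by ring.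
  eapply Rle_lt_trans; [apply Rabs_triang|]. rewrite Rabs_minus_sym in T2.
  assert (Rabs ((Iq g q - RInt (g q) (- N) N) + (RInt (g q) (- N) N - RInt (g q0) (- N) N)) <=
          Rabs (Iq g q - RInt (g q) (- N) N) + Rabs (RInt (g q) (- N) N - RInt (g q0) (- N) N)) by apply Rabs_triang.
  rewrite Rabs_Ropp. rewrite Rabs_minus_sym in T2. change (Rabs (RInt (g q) (- N) N - RInt (g q0) (- N) N) < eps / 3) in Hd. lra.
Qed.

Lemma outer : is_RInt_gen (Iq g) (Rbar_locally m_infty) (Rbar_locally p_infty)
   (RInt_gen (Iq g) (Rbar_locally m_infty) (Rbar_locally p_infty)).
Proof.
  assert (C4 : 0 <= 4 * C) by lra.
  destruct (E1 (Iq g) (4 * C) I_cont C4 (fun q => proj2 (proj2 (inner_spec q)))) as [L [HL _]].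
  rewrite (gen_uniq _ _ HL). exact HL.
Qed.

End Inner.

Lemma lim0 (f : R -> R) C : 0 <= C -> (forall x, Rabs (f x) <= C / (1 + x ^ 2)) ->
  filterlim f (Rbar_locally m_infty) (locally 0) /\ filterlim f (Rbar_locally p_infty) (locally 0).
Proof.
  intros C0 hb.
  assert (K : forall eps x, 0 < eps -> C / eps < Rabs x -> Rabs (f x - 0) < eps).
  { intros eps x He Hx. rewrite Rminus_0_r. eapply Rle_lt_trans; [apply hb|].
    assert (C < eps * Rabs x).
    { apply (Rmult_lt_compat_l eps) in Hx; auto. replace (eps * (C / eps)) with C in Hx by (field; lra). lra. }
    assert (Rabs x <= 1 + x ^ 2).
    { destruct (Rle_or_lt 0 x). rewrite Rabs_pos_eq by lra. simpl; nra.
      rewrite Rabs_left by lra. simpl; nra. }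
    apply (Rmult_lt_reg_r (1 + x ^ 2)). simpl; nra.
    replace (C / (1 + x ^ 2) * (1 + x ^ 2)) with C by (field; simpl; nra). nra. }
  split; apply filterlim_locally; intros eps; assert (He : 0 < eps) by apply cond_pos.
  - exists (- (C / eps) - 1). intros x Hx. apply ball_R. apply K; auto.
    assert (0 <= C / eps) by (apply Rdiv_le_0_compat; lra).
    rewrite Rabs_left by lra. lra.
  - exists (C / eps + 1). intros x Hx. apply ball_R. apply K; auto.
    assert (0 <= C / eps) by (apply Rdiv_le_0_compat; lra).
    rewrite Rabs_pos_eq by lra. lra.
Qed.

Lemma inner_dp (F : R -> R -> R) q C :
  (forall p, ex_derive (fun x => F q x) p) ->
  (forall p, continuous (fun y => Derive (fun x => F q x) y) p) ->
  0 <= C -> (forall p, Rabs (F q p) <= C / (1 + p ^ 2)) ->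
  is_RInt_gen (fun p => Derive (fun x => F q x) p) (Rbar_locally m_infty) (Rbar_locally p_infty) 0.
Proof.
  intros Hd Hc C0 Hb. destruct (lim0 (fun x => F q x) C C0 Hb) as [L1 L2].
  replace 0 with (0 - 0) by ring.
  apply (is_RInt_gen_Derive (fun x => F q x) 0 0).
  - apply filter_forall. intros; apply Hd.
  - apply filter_forall. intros; apply Hc.
  - exact L1.
  - exact L2.
Qed.

Lemma zero_by_N x D : (forall N, 1 <= N -> Rabs x <= D / N) -> x = 0.
Proof.
  intros H. destruct (Req_dec x 0) as [E|E]; auto. exfalso.
  assert (Hx : 0 < Rabs x) by (apply Rabs_pos_lt; auto).
  assert (HD : 0 <= D) by (specialize (H 1 (Rle_refl 1)); assert (0 <= Rabs x) by apply Rabs_pos; unfold Rdiv in H; rewrite Rinv_1 in H; lra).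
  set (N := 1 + 2 * D / Rabs x).
  assert (HN : 1 <= N) by (unfold N; assert (0 <= 2 * D / Rabs x) by (apply Rdiv_le_0_compat; lra); lra).
  specialize (H N HN).
  assert (Rabs x * N = Rabs x + 2 * D) by (unfold N; field; lra).
  apply (Rmult_le_compat_r N) in H; [|lra].
  replace (D / N * N) with D in H by (field; lra). lra.
Qed.

Section DQ.
Variable G : R -> R -> R.
Let dG := fun u v => Derive (fun z => G z v) u.
Variables C C' : R.
Hypothesis Gd : forall q p, ex_derive (fun x => G x p) q.
Hypothesis Gc : Cont G.
Hypothesis C0 : 0 <= C.
Hypothesis Gb : forall q p, Rabs (G q p) <= C / ((1 + q ^ 2) * (1 + p ^ 2)).
Hypothesis dGc : Cont dG.
Hypothesis C0' : 0 <= C'.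
Hypothesis dGb : forall q p, Rabs (dG q p) <= C' / ((1 + q ^ 2) * (1 + p ^ 2)).

Lemma dq_step a b : RInt (Iq dG) a b = Iq G b - Iq G a.
Proof.
  apply Rminus_diag_uniq.
  apply (zero_by_N _ (Rabs (b - a) * (2 * C') + 4 * C)). intros N HN.
  set (JN := fun q => RInt (G q) (- N) N).
  set (KN := fun q => RInt (dG q) (- N) N).
  assert (HJ : forall q, is_derive JN q (KN q)).
  { intros q. unfold JN, KN, dG.
    apply (is_derive_RInt_param G (- N) N q).
    - apply filter_forall. intros; apply Gd.
    - intros; apply dGc.
    - apply filter_forall. intros y. apply ex_RInt_contR. intros; apply cont2_p, Gc. }
  assert (HK : is_RInt KN a b (JN b - JN a)).
  { apply (is_RInt_derive JN KN a b).
    - intros; apply HJ.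
    - intros; apply (C1 dG (- N) N); [lra| exact dGc]. }
  assert (exK : ex_RInt (Iq dG) a b) by (apply ex_RInt_contR; intros; apply (I_cont dG C'); auto).
  assert (exKN : ex_RInt KN a b) by (exists (JN b - JN a); exact HK).
  assert (EKN : RInt KN a b = JN b - JN a) by (apply is_RInt_unique; exact HK).
  assert (B1 : Rabs (RInt (Iq dG) a b - RInt KN a b) <= Rabs (b - a) * (2 * C' / N)).
  { rewrite <- RInt_minusR by auto.
    apply (norm_RInt_le_const_abs (fun x => Iq dG x - KN x) a b).
    - intros x _. destruct (inner_spec dG C' dGc C0' dGb x) as [_ [T _]]. apply T; auto.
    - apply RInt_correctR. apply ex_RInt_contR. intros x.
      apply (continuous_minus (Iq dG) KN). apply (I_cont dG C'); auto. apply (C1 dG (- N) N); [lra|exact dGc]. }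
  destruct (inner_spec G C Gc C0 Gb a) as [_ [Ta _]].
  destruct (inner_spec G C Gc C0 Gb b) as [_ [Tb _]].
  specialize (Ta N HN). specialize (Tb N HN). fold (JN a) in Ta. fold (JN b) in Tb.
  rewrite EKN in B1.
  replace (RInt (Iq dG) a b - (Iq G b - Iq G a)) with
    ((RInt (Iq dG) a b - (JN b - JN a)) - (Iq G b - JN b) + (Iq G a - JN a)) by ring.
  assert (HNp : 0 < N) by lra.
  replace ((Rabs (b - a) * (2 * C') + 4 * C) / N) with (Rabs (b - a) * (2 * C' / N) + 2 * C / N + 2 * C / N) by (field; lra).
  eapply Rle_trans; [apply Rabs_triang|].
  eapply Rle_trans; [apply Rplus_le_compat_r; apply Rabs_triang|].
  rewrite Rabs_Ropp. lra.
Qed.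

Lemma Int_dq : is_RInt_gen (Iq dG) (Rbar_locally m_infty) (Rbar_locally p_infty) 0.
Proof.
  assert (C4 : 0 <= 4 * C) by lra.
  destruct (lim0 (Iq G) (4 * C) C4 (fun q => proj2 (proj2 (inner_spec G C Gc C0 Gb q)))) as [L1 L2].
  apply (filterlimi_lim_ext (fun ab : R * R => RInt (Iq dG) (fst ab) (snd ab))).
  - intros [a b]. apply RInt_correctR. apply ex_RInt_contR. intros; apply (I_cont dG C'); auto.
  - apply filterlim_locally. intros eps. assert (He : 0 < eps) by apply cond_pos.
    assert (He2 : 0 < eps / 2) by lra.
    destruct (proj1 (filterlim_locally _ _) L1 (mkposreal _ He2)) as [M1 HM1].
    destruct (proj1 (filterlim_locally _ _) L2 (mkposreal _ He2)) as [M2 HM2].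
    apply (Filter_prod _ _ _ (fun a => a < M1) (fun b => M2 < b)).
    + exists M1; auto.
    + exists M2; auto.
    + intros a b Ha Hb. specialize (HM1 a Ha). specialize (HM2 b Hb).
      change (Rabs (Iq G a - 0) < eps / 2) in HM1. change (Rabs (Iq G b - 0) < eps / 2) in HM2.
      apply ball_R. simpl. rewrite dq_step.
      rewrite Rminus_0_r in *.
      replace (Iq G b - Iq G a - 0) with (Iq G b + - Iq G a) by ring.
      eapply Rle_lt_trans; [apply Rabs_triang|]. rewrite Rabs_Ropp. lra.
Qed.

End DQ.

Lemma Dec_ext f g : (forall q p, f q p = g q p) -> Dec f -> Dec g.
Proof. intros E [C [C0 HC]]. exists C. split; auto. intros q p. rewrite <- E. auto. Qed.

Lemma Dec_plus f g : Dec f -> Dec g -> Dec (fun q p => f q p + g q p).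
Proof.
  intros [C1 [P1 H1]] [C2 [P2 H2]]. exists (C1 + C2). split; [lra|]. intros q p.
  eapply Rle_trans; [apply Rabs_triang|]. specialize (H1 q p). specialize (H2 q p).
  unfold Rdiv in *. rewrite Rmult_plus_distr_r. lra.
Qed.

Lemma Dec_minus f g : Dec f -> Dec g -> Dec (fun q p => f q p - g q p).
Proof.
  intros [C1 [P1 H1]] [C2 [P2 H2]]. exists (C1 + C2). split; [lra|]. intros q p.
  unfold Rminus. eapply Rle_trans; [apply Rabs_triang|]. rewrite Rabs_Ropp. specialize (H1 q p). specialize (H2 q p).
  unfold Rdiv in *. rewrite Rmult_plus_distr_r. lra.
Qed.

Lemma Dec_scal c f : Dec f -> Dec (fun q p => c * f q p).
Proof.
  intros [C1 [P1 H1]]. exists (Rabs c * C1). split; [apply Rmult_le_pos; auto; apply Rabs_pos|]. intros q p.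
  rewrite Rabs_mult. unfold Rdiv in *. rewrite Rmult_assoc. apply Rmult_le_compat_l; [apply Rabs_pos|]. apply H1.
Qed.

Lemma Cont_ext f g : (forall q p, f q p = g q p) -> Cont f -> Cont g.
Proof. intros E Hf q p. apply (continuity_2d_pt_ext f g); auto. Qed.

Lemma Dec_opp f : Dec f -> Dec (fun q p => - f q p).
Proof. intros Hf. apply (Dec_ext (fun q p => -1 * f q p)). intros; ring. apply Dec_scal; auto. Qed.

Lemma gen_plus (f g : R -> R) lf lg :
  is_RInt_gen f (Rbar_locally m_infty) (Rbar_locally p_infty) lf ->
  is_RInt_gen g (Rbar_locally m_infty) (Rbar_locally p_infty) lg ->
  is_RInt_gen (fun x => f x + g x) (Rbar_locally m_infty) (Rbar_locally p_infty) (lf + lg).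
Proof. intros H1 H2. exact (@is_RInt_gen_plus R_NormedModule _ _ _ _ f g lf lg H1 H2). Qed.

Section P3.
Variables (hbar : R) (H : R -> R -> R) (chi : R -> R -> R -> C) (t : R).
Hypothesis Hrd : rapid_decay H chi.
Hypothesis Ha : smooth3 (reF chi).
Hypothesis Hb : smooth3 (imF chi).
Hypothesis Hh : smooth3 (liftH H).

Definition Sel (f : R -> R -> R -> R) := f = reF chi \/ f = imF chi.

Lemma sel_bnd f ds q p : Sel f -> Rabs (pd3s ds f q p t) <= Rabs (pd3s ds (reF chi) q p t) + Rabs (pd3s ds (imF chi) q p t).
Proof. intros [E|E]; subst f; assert (Hx := Rabs_pos (pd3s ds (reF chi) q p t)); assert (Hy := Rabs_pos (pd3s ds (imF chi) q p t)); lra. Qed.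

Lemma poly_ineq q p : (1 + Rabs p) * ((1 + q ^ 2) * (1 + p ^ 2)) <= 2 * (1 + q ^ 2 + p ^ 2) ^ 3.
Proof.
  set (s := 1 + q ^ 2 + p ^ 2).
  assert (Hp : Rabs p <= s).
  { unfold s. assert (Rabs p * Rabs p = p ^ 2) by (simpl; rewrite Rmult_1_r, <- Rabs_mult; apply Rabs_pos_eq; nra).
    assert (0 <= Rabs p) by apply Rabs_pos. assert (0 <= q ^ 2) by (simpl; nra). nra. }
  assert (Hs1 : 1 <= s) by (unfold s; simpl; nra).
  assert (Hqp : (1 + q ^ 2) * (1 + p ^ 2) <= s ^ 2) by (unfold s; simpl; nra).
  assert (H0 : 0 <= (1 + q ^ 2) * (1 + p ^ 2)) by (simpl; nra).
  assert (1 + Rabs p <= 2 * s) by lra.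
  replace (s ^ 3) with (s * s ^ 2) by ring.
  assert (0 <= s ^ 2) by (simpl; nra).
  assert ((1 + Rabs p) * ((1 + q ^ 2) * (1 + p ^ 2)) <= (2 * s) * ((1 + q ^ 2) * (1 + p ^ 2))) by (apply Rmult_le_compat_r; lra).
  assert ((2 * s) * ((1 + q ^ 2) * (1 + p ^ 2)) <= (2 * s) * s ^ 2) by (apply Rmult_le_compat_l; lra).
  lra.
Qed.

Lemma Dec_gen (w : R -> R) dsH ds1 ds2 f1 f2 : (forall p, Rabs (w p) <= 1 + Rabs p) -> Sel f1 -> Sel f2 ->
  Dec (fun q p => w p * (pd3s dsH (liftH H) q p t * pd3s ds1 f1 q p t * pd3s ds2 f2 q p t)).
Proof.
  intros Hw S1 S2.
  destruct (Hrd t ds1 dsH 3%nat) as [M1 HM1].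
  destruct (Hrd t ds2 [] 0%nat) as [M2 HM2].
  assert (M1p : 0 <= M1).
  { eapply Rle_trans; [|apply (HM1 0 0)]. apply Rmult_le_pos; [apply Rmult_le_pos|].
    simpl; nra. assert (Hx := Rabs_pos (pd3s dsH (liftH H) 0 0 t)); lra.
    assert (Hx := Rabs_pos (pd3s ds1 (reF chi) 0 0 t)); assert (Hy := Rabs_pos (pd3s ds1 (imF chi) 0 0 t)); lra. }
  assert (M2p : 0 <= M2).
  { eapply Rle_trans; [|apply (HM2 0 0)]. apply Rmult_le_pos; [apply Rmult_le_pos|].
    simpl; nra. assert (Hx := Rabs_pos (pd3s [] (liftH H) 0 0 t)); lra.
    assert (Hx := Rabs_pos (pd3s ds2 (reF chi) 0 0 t)); assert (Hy := Rabs_pos (pd3s ds2 (imF chi) 0 0 t)); lra. }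
  exists (2 * M1 * M2). split; [nra|]. intros q p.
  specialize (HM1 q p). specialize (HM2 q p).
  set (hD := pd3s dsH (liftH H) q p t) in *.
  set (X1 := Rabs (pd3s ds1 (reF chi) q p t) + Rabs (pd3s ds1 (imF chi) q p t)) in *.
  set (X2 := Rabs (pd3s ds2 (reF chi) q p t) + Rabs (pd3s ds2 (imF chi) q p t)) in *.
  assert (B1 := sel_bnd f1 ds1 q p S1). fold X1 in B1.
  assert (B2 := sel_bnd f2 ds2 q p S2). fold X2 in B2.
  set (s := 1 + q ^ 2 + p ^ 2) in *.
  assert (Hs1 : 1 <= s) by (unfold s; simpl; nra).
  assert (X2b : X2 <= M2).
  { rewrite pow_O, Rmult_1_l in HM2. assert (Hx := Rabs_pos (pd3s [] (liftH H) q p t)).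
    assert (0 <= X2) by (unfold X2; assert (Hy := Rabs_pos (pd3s ds2 (reF chi) q p t)); assert (Hz := Rabs_pos (pd3s ds2 (imF chi) q p t)); lra).
    nra. }
  assert (X1p : 0 <= X1) by (unfold X1; assert (Hy := Rabs_pos (pd3s ds1 (reF chi) q p t)); assert (Hz := Rabs_pos (pd3s ds1 (imF chi) q p t)); lra).
  assert (hDp : 0 <= Rabs hD) by apply Rabs_pos.
  set (Y := (1 + Rabs hD) * X1) in *.
  assert (Yp : 0 <= Y) by (unfold Y; nra).
  assert (PI1 := poly_ineq q p). fold s in PI1.
  assert (Q0 : 0 < (1 + q ^ 2) * (1 + p ^ 2)) by (simpl; nra).
  rewrite !Rabs_mult.
  assert (Hw' := Hw p).
  assert (W0 : 0 <= Rabs (w p)) by apply Rabs_pos.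
  assert (F1 : 0 <= Rabs (pd3s ds1 f1 q p t)) by apply Rabs_pos.
  assert (F2 : 0 <= Rabs (pd3s ds2 f2 q p t)) by apply Rabs_pos.
  assert (St : Rabs (w p) * (Rabs hD * Rabs (pd3s ds1 f1 q p t) * Rabs (pd3s ds2 f2 q p t)) <= (1 + Rabs p) * Y * M2).
  { assert (A1 : Rabs hD * Rabs (pd3s ds1 f1 q p t) <= Y).
    { unfold Y. apply Rmult_le_compat; lra. }
    assert (A2 : Rabs hD * Rabs (pd3s ds1 f1 q p t) * Rabs (pd3s ds2 f2 q p t) <= Y * M2).
    { apply Rmult_le_compat; try lra. apply Rmult_le_pos; lra. }
    replace ((1 + Rabs p) * Y * M2) with ((1 + Rabs p) * (Y * M2)) by ring.
    apply Rmult_le_compat; try lra. apply Rmult_le_pos; [apply Rmult_le_pos|]; lra. }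
  apply (Rmult_le_reg_r ((1 + q ^ 2) * (1 + p ^ 2))); [exact Q0|].
  replace (2 * M1 * M2 / ((1 + q ^ 2) * (1 + p ^ 2)) * ((1 + q ^ 2) * (1 + p ^ 2))) with (2 * M1 * M2)
    by (field; try split; simpl; nra).
  assert (Y * s ^ 3 <= M1) by (unfold Y; nra).
  assert (0 <= 1 + Rabs p) by (assert (Hr := Rabs_pos p); lra).
  assert ((1 + Rabs p) * Y * M2 * ((1 + q ^ 2) * (1 + p ^ 2)) <= 2 * s ^ 3 * Y * M2).
  { replace ((1 + Rabs p) * Y * M2 * ((1 + q ^ 2) * (1 + p ^ 2))) with (((1 + Rabs p) * ((1 + q ^ 2) * (1 + p ^ 2))) * (Y * M2)) by ring.
    replace (2 * s ^ 3 * Y * M2) with ((2 * s ^ 3) * (Y * M2)) by ring.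
    apply Rmult_le_compat_r; [nra|lra]. }
  assert (2 * s ^ 3 * Y * M2 <= 2 * M1 * M2) by nra.
  assert (Rabs (w p) * (Rabs hD * Rabs (pd3s ds1 f1 q p t) * Rabs (pd3s ds2 f2 q p t)) * ((1 + q ^ 2) * (1 + p ^ 2)) <= (1 + Rabs p) * Y * M2 * ((1 + q ^ 2) * (1 + p ^ 2))) by (apply Rmult_le_compat_r; lra).
  lra.
Qed.

End P3.

Section P3b.
Variables (hbar : R) (H : R -> R -> R) (chi : R -> R -> R -> C) (t : R).
Hypothesis Hrd : rapid_decay H chi.
Hypothesis Ha : smooth3 (reF chi).
Hypothesis Hb : smooth3 (imF chi).
Hypothesis Hh : smooth3 (liftH H).

Lemma Dec_mono dsH ds1 ds2 f1 f2 : Sel chi f1 -> Sel chi f2 ->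
  Dec (fun q p => pd3s dsH (liftH H) q p t * pd3s ds1 f1 q p t * pd3s ds2 f2 q p t).
Proof.
  intros S1 S2. apply (Dec_ext (fun q p => (fun _ => 1) p * (pd3s dsH (liftH H) q p t * pd3s ds1 f1 q p t * pd3s ds2 f2 q p t))).
  intros; ring. apply (Dec_gen H chi t Hrd); auto. intros p. rewrite Rabs_R1. assert (Hr := Rabs_pos p). lra.
Qed.

Lemma Dec_pmono dsH ds1 ds2 f1 f2 : Sel chi f1 -> Sel chi f2 ->
  Dec (fun q p => p * (pd3s dsH (liftH H) q p t * pd3s ds1 f1 q p t * pd3s ds2 f2 q p t)).
Proof.
  intros S1 S2. apply (Dec_gen H chi t Hrd (fun p => p)); auto. intros p. lra.
Qed.

Lemma cont_atom f ds q p : smooth3 f -> continuity_2d_pt (fun u v => pd3s ds f u v t) q p.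
Proof. intros Hs. exact (proj1 (cont3_2d (pd3s ds f) (proj1 (Hs ds)) q p t)). Qed.

End P3b.

Ltac sel_tac := first [left; reflexivity | right; reflexivity].
Ltac dec_tac Hr := repeat first [ apply Dec_minus | apply Dec_plus | apply Dec_opp | apply (Dec_pmono _ _ _ Hr); sel_tac
  | apply (Dec_mono _ _ _ Hr); sel_tac | apply Dec_scal ].
Ltac cont_tac := repeat first [ apply cont_atom; assumption | apply continuity_2d_pt_plus
  | apply continuity_2d_pt_minus | apply continuity_2d_pt_mult | apply continuity_2d_pt_opp
  | apply continuity_2d_pt_id2 | apply continuity_2d_pt_id1 | apply continuity_2d_pt_const ].

Definition Rcan (hbar : R) (H : R -> R -> R) (chi : R -> R -> R -> C) (t q p : R) : R :=
  hbar * (pd3s [Dq] (liftH H) q p t * pd3s [] (imF chi) q p t * pd3s [Dp] (reF chi) q p t) - hbar * (pd3s [Dp] (liftH H) q p t * pd3s [] (imF chi) q p t * pd3s [Dq] (reF chi) q p t) - hbar * (pd3s [Dq] (liftH H) q p t * pd3s [] (reF chi) q p t * pd3s [Dp] (imF chi) q p t) + hbar * (pd3s [Dp] (liftH H) q p t * pd3s [] (reF chi) q p t * pd3s [Dq] (imF chi) q p t) - p * (pd3s [Dp] (liftH H) q p t * pd3s [] (reF chi) q p t * pd3s [] (reF chi) q p t) - p * (pd3s [Dp] (liftH H) q p t * pd3s [] (imF chi) q p t * pd3s [] (imF chi) q p t) + pd3s [] (liftH H) q p t * pd3s [] (reF chi) q p t * pd3s [] (reF chi) q p t + pd3s [] (liftH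 H) q p t * pd3s [] (imF chi) q p t * pd3s [] (imF chi) q p t.

Definition Ff (hbar : R) (H : R -> R -> R) (chi : R -> R -> R -> C) (t q p : R) : R :=
  p * (pd3s [] (liftH H) q p t * pd3s [] (reF chi) q p t * pd3s [] (reF chi) q p t) + p * (pd3s [] (liftH H) q p t * pd3s [] (imF chi) q p t * pd3s [] (imF chi) q p t) - hbar * (pd3s [] (liftH H) q p t * pd3s [] (reF chi) q p t * pd3s [Dq] (imF chi) q p t) + hbar * (pd3s [] (liftH H) q p t * pd3s [] (imF chi) q p t * pd3s [Dq] (reF chi) q p t).

Definition dFf (hbar : R) (H : R -> R -> R) (chi : R -> R -> R -> C) (t q p : R) : R :=
  pd3s [] (liftH H) q p t * pd3s [] (reF chi) q p t * pd3s [] (reF chi) q p t + pd3s [] (liftH H) q p t * pd3s [] (imF chi) q p t * pd3s [] (imF chi) q p t + p * (pd3s [Dp] (liftH H) q p t * pd3s [] (reF chi) q p t * pd3s [] (reF chi) q p t) + p * (pd3s [Dp] (liftH H) q p t * pd3s [] (imF chi) q p t * pd3s [] (imF chi) q p t) + 2 * (p * (pd3s [] (liftH H) q p t * pd3s [] (reF chi) q p t * pd3s [Dp] (reF chi) q p t)) + 2 * (p * (pd3s [] (liftH H) q p t * pd3s [] (imF chi) q p t * pd3s [Dp] (imF chi) q p t)) - hbar * (pd3s [Dp] (liftH H) q p t * pd3s [] (reF chi) q p t * pd3s [Dq] (imF chi) q p t) + hbar * (pd3s [Dp] (liftH H) q p t * pd3s [] (imF chi) q p t * pd3s [Dq] (reF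 chi) q p t) - hbar * (pd3s [] (liftH H) q p t * pd3s [Dp] (reF chi) q p t * pd3s [Dq] (imF chi) q p t) - hbar * (pd3s [] (liftH H) q p t * pd3s [] (reF chi) q p t * pd3s [Dp;Dq] (imF chi) q p t) + hbar * (pd3s [] (liftH H) q p t * pd3s [Dp] (imF chi) q p t * pd3s [Dq] (reF chi) q p t) + hbar * (pd3s [] (liftH H) q p t * pd3s [] (imF chi) q p t * pd3s [Dp;Dq] (reF chi) q p t).

Definition Gf (hbar : R) (H : R -> R -> R) (chi : R -> R -> R -> C) (t q p : R) : R :=
  hbar * (pd3s [] (liftH H) q p t * pd3s [] (reF chi) q p t * pd3s [Dp] (imF chi) q p t) - hbar * (pd3s [] (liftH H) q p t * pd3s [] (imF chi) q p t * pd3s [Dp] (reF chi) q p t).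

Definition dGf (hbar : R) (H : R -> R -> R) (chi : R -> R -> R -> C) (t q p : R) : R :=
  hbar * (pd3s [Dq] (liftH H) q p t * pd3s [] (reF chi) q p t * pd3s [Dp] (imF chi) q p t) - hbar * (pd3s [Dq] (liftH H) q p t * pd3s [] (imF chi) q p t * pd3s [Dp] (reF chi) q p t) + hbar * (pd3s [] (liftH H) q p t * pd3s [Dq] (reF chi) q p t * pd3s [Dp] (imF chi) q p t) + hbar * (pd3s [] (liftH H) q p t * pd3s [] (reF chi) q p t * pd3s [Dq;Dp] (imF chi) q p t) - hbar * (pd3s [] (liftH H) q p t * pd3s [Dq] (imF chi) q p t * pd3s [Dp] (reF chi) q p t) - hbar * (pd3s [] (liftH H) q p t * pd3s [] (imF chi) q p t * pd3s [Dq;Dp] (reF chi) q p t).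

Section P3c.
Variables (hbar : R) (H : R -> R -> R) (chi : R -> R -> R -> C) (t : R).
Hypothesis Hrd : rapid_decay H chi.
Hypothesis Ha : smooth3 (reF chi).
Hypothesis Hb : smooth3 (imF chi).
Hypothesis Hh : smooth3 (liftH H).

Lemma Rf_eq q p : Re (Cconj (chi q p t) *
           (Ci * RtoC hbar * PB (Hc H) chi q p t
            - RtoC (p * pd3 Dp (liftH H) q p t - H q p) * chi q p t))%C = Rcan hbar H chi t q p.
Proof.
  unfold PB, dC, Hc, Rcan.
  assert (E0 : forall d, pd3 d (imF (fun q p _ => RtoC (H q p))) q p t = 0).
  { intros []; simpl; unfold imF; simpl; apply Derive_const. }
  rewrite !E0.
  change (pd3 Dq (reF (fun q p _ => RtoC (H q p))) q p t) with (pd3s [Dq] (liftH H) q p t).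
  change (pd3 Dp (reF (fun q p _ => RtoC (H q p))) q p t) with (pd3s [Dp] (liftH H) q p t).
  change (pd3 Dp (liftH H) q p t) with (pd3s [Dp] (liftH H) q p t).
  change (pd3 Dq (reF chi) q p t) with (pd3s [Dq] (reF chi) q p t).
  change (pd3 Dp (reF chi) q p t) with (pd3s [Dp] (reF chi) q p t).
  change (pd3 Dq (imF chi) q p t) with (pd3s [Dq] (imF chi) q p t).
  change (pd3 Dp (imF chi) q p t) with (pd3s [Dp] (imF chi) q p t).
  change (H q p) with (pd3s [] (liftH H) q p t).
  change (pd3s [] (reF chi) q p t) with (fst (chi q p t)).
  change (pd3s [] (imF chi) q p t) with (snd (chi q p t)).
  destruct (chi q p t) as [x y]. simpl. ring.
Qed.

Lemma dF_is q p : is_derive (fun x => Ff hbar H chi t q x) p (dFf hbar H chi t q p).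
Proof. unfold Ff, dFf. auto_derive. solve_ex. cbn [pd3s pd3]. ring. Qed.

Lemma dG_is q p : is_derive (fun x => Gf hbar H chi t x p) q (dGf hbar H chi t q p).
Proof. unfold Gf, dGf. auto_derive. solve_ex. cbn [pd3s pd3]. ring. Qed.

Lemma ident q p : Re (rho_c hbar chi q p t) * H q p =
  Rcan hbar H chi t q p + dFf hbar H chi t q p + dGf hbar H chi t q p.
Proof.
  rewrite re_rho by auto. unfold RHO, Rcan, dFf, dGf. cbv zeta.
  rewrite (swap3 (reF chi) [] Dp Dq q p t Ha), (swap3 (imF chi) [] Dp Dq q p t Hb).
  change (H q p) with (pd3s [] (liftH H) q p t). ring.
Qed.


Lemma Dec_R : Dec (Rcan hbar H chi t). Proof. unfold Rcan. dec_tac Hrd. Qed.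
Lemma Dec_F : Dec (Ff hbar H chi t). Proof. unfold Ff. dec_tac Hrd. Qed.
Lemma Dec_G : Dec (Gf hbar H chi t). Proof. unfold Gf. dec_tac Hrd. Qed.
Lemma Dec_dG : Dec (dGf hbar H chi t). Proof. unfold dGf. dec_tac Hrd. Qed.
Lemma Cont_R : Cont (Rcan hbar H chi t). Proof. intros q p. unfold Rcan. cont_tac. Qed.
Lemma Cont_G : Cont (Gf hbar H chi t). Proof. intros q p. unfold Gf. cont_tac. Qed.
Lemma Cont_dG : Cont (dGf hbar H chi t). Proof. intros q p. unfold dGf. cont_tac. Qed.
Lemma Cont_dF : Cont (dFf hbar H chi t). Proof. intros q p. unfold dFf. cont_tac. Qed.

End P3c.

Section P3d.
Variables (hbar : R) (H : R -> R -> R) (chi : R -> R -> R -> C) (t : R).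
Hypothesis Hrd : rapid_decay H chi.
Hypothesis Ha : smooth3 (reF chi).
Hypothesis Hb : smooth3 (imF chi).
Hypothesis Hh : smooth3 (liftH H).

Lemma part3 :
  Int2 (fun q p => Re (rho_c hbar chi q p t) * H q p) =
  Int2 (fun q p =>
       Re (Cconj (chi q p t) *
           (Ci * RtoC hbar * PB (Hc H) chi q p t
            - RtoC (p * pd3 Dp (liftH H) q p t - H q p) * chi q p t))%C).
Proof.
  set (Rf := fun q p => Re (Cconj (chi q p t) *
           (Ci * RtoC hbar * PB (Hc H) chi q p t
            - RtoC (p * pd3 Dp (liftH H) q p t - H q p) * chi q p t))%C).
  set (Lf := fun q p => Re (rho_c hbar chi q p t) * H q p).
  set (G := Gf hbar H chi t).
  set (dG := fun u v => Derive (fun z => G z v) u).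
  assert (ERf : forall q p, Rcan hbar H chi t q p = Rf q p) by (intros; unfold Rf; rewrite Rf_eq; reflexivity).
  assert (EdG : forall q p, dGf hbar H chi t q p = dG q p) by (intros; unfold dG, G; symmetry; apply is_derive_unique, dG_is; auto).
  assert (EdF : forall q p, Derive (fun x => Ff hbar H chi t q x) p = dFf hbar H chi t q p) by (intros; apply is_derive_unique, dF_is; auto).
  destruct (Dec_ext _ _ ERf (Dec_R hbar H chi t Hrd)) as [CR [CR0 CRb]].
  assert (ContR : Cont Rf) by (apply (Cont_ext _ _ ERf), Cont_R; auto).
  destruct (Dec_ext _ _ EdG (Dec_dG hbar H chi t Hrd)) as [CD [CD0 CDb]].
  assert (ContD : Cont dG) by (apply (Cont_ext _ _ EdG), Cont_dG; auto).
  destruct (Dec_G hbar H chi t Hrd) as [CG [CG0 CGb]].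
  assert (ContG : Cont G) by (apply Cont_G; auto).
  destruct (Dec_F hbar H chi t Hrd) as [CF [CF0 CFb]].
  assert (Inner : forall q, RInt_gen (fun p => Lf q p) (Rbar_locally m_infty) (Rbar_locally p_infty) = Iq Rf q + Iq dG q).
  { intros q. apply gen_uniq.
    assert (E : (fun p => Lf q p) = (fun p => (Rf q p + Derive (fun x => Ff hbar H chi t q x) p) + dG q p)).
    { apply functional_extensionality; intros p. unfold Lf. rewrite ident by auto.
      rewrite ERf, EdG, EdF. reflexivity. }
    rewrite E. replace (Iq Rf q + Iq dG q) with ((Iq Rf q + 0) + Iq dG q) by (rewrite Rplus_0_r; reflexivity).
    apply gen_plus; [apply gen_plus|].
    - exact (proj1 (inner_spec Rf CR ContR CR0 CRb q)).
    - apply (inner_dp _ q (CF / (1 + q ^ 2))).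
      + intros p. exists (dFf hbar H chi t q p). apply dF_is; auto.
      + intros p. apply (continuous_ext (fun y => dFf hbar H chi t q y)).
        intros y; symmetry; apply EdF. apply cont2_p. apply Cont_dF; auto.
      + apply Rdiv_le_0_compat; [lra| simpl; nra].
      + intros p. replace (CF / (1 + q ^ 2) / (1 + p ^ 2)) with (CF / ((1 + q ^ 2) * (1 + p ^ 2))).
        apply CFb. field. split; simpl; nra.
    - exact (proj1 (inner_spec dG CD ContD CD0 CDb q)). }
  unfold Int2. fold Lf. fold Rf.
  assert (E2 : (fun q => RInt_gen (fun p => Lf q p) (Rbar_locally m_infty) (Rbar_locally p_infty)) = (fun q => Iq Rf q + Iq dG q)).
  { apply functional_extensionality; intros q. apply Inner. }
  rewrite E2. apply gen_uniq.
  replace (RInt_gen (fun q => RInt_gen (fun p => Rf q p) (Rbar_locally m_infty) (Rbar_locally p_infty)) (Rbar_locally m_infty) (Rbar_locally p_infty))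
    with (RInt_gen (Iq Rf) (Rbar_locally m_infty) (Rbar_locally p_infty) + 0) by (rewrite Rplus_0_r; reflexivity).
  apply gen_plus.
  - exact (outer Rf CR ContR CR0 CRb).
  - apply (Int_dq G CG CD); auto.
    intros q p. exists (dGf hbar H chi t q p). apply dG_is; auto.
Qed.

End P3d.

Theorem mainTheorem2 (hbar : R) (H : R -> R -> R) (chi : R -> R -> R -> C) :
  0 < hbar ->
  smooth2 H ->
  smooth3 (reF chi) -> smooth3 (imF chi) ->
  rapid_decay H chi ->
  KvH hbar H chi ->
  (forall q p t, Im (rho_c hbar chi q p t) = 0) /\
  (forall q p t, dC Dt (rho_c hbar chi) q p t = PB (Hc H) (rho_c hbar chi) q p t) /\
  (forall t,
     Int2 (fun q p => Re (rho_c hbar chi q p t) * H q p) =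
     Int2 (fun q p =>
       Re (Cconj (chi q p t) *
           (Ci * RtoC hbar * PB (Hc H) chi q p t
            - RtoC (p * pd3 Dp (liftH H) q p t - H q p) * chi q p t))%C)).
Proof.
  intros hp Hh Ha Hb Hrd K. split; [|split].
  - intros q p t. apply im_rho.
  - intros q p t. apply part2C; auto.
  - intros t. apply (part3 hbar H chi t Hrd Ha Hb Hh).
Qed.
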